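(* Let $(R,\mathfrak{m})$ be a $d$-dimensional local ring of prime characteristic $p>0$, let $I$ be an $\mathfrak{m}$-primary ideal, and let $J=(x_1,\ldots,x_d)$ be a minimal reduction of $I$ generated by a system of parameters. For $q=p^e$ let $\mathcal{R}'_q=R[I^{[q]}t,t^{-1}]$ be the extended Rees algebra of $I^{[q]}$ and $J_q=(x_1^qt,\ldots,x_d^qt)\subseteq\mathcal{R}'_q$; write $\mathcal{R}'=\mathcal{R}'_1$. Then $a(H^d_{J_q}(\mathcal{R}'_q))\leq a(H^d_{J_1}(\mathcal{R}'))$ for all $q=p^e$.
   Context: $I^{[q]}=(x^q\mid x\in I)$. The local cohomology modules $H^d_{J_q}(\mathcal{R}'_q)$ are $\mathbb{Z}$-graded with the grading induced by $\deg t=1$. For a $\mathbb{Z}$-graded module $M$, $a(M)=\sup\{n\in\mathbb{Z}\mid M_n\neq0\}$. *)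

(* Defs.v *)
From HB Require Import structures.
From mathcomp Require Import all_boot all_order all_algebra.
Set Implicit Arguments. Unset Strict Implicit. Unset Printing Implicit Defensive.
Import Order.TTheory GRing.Theory Num.Theory.
Local Open Scope ring_scope.

Section CommAlg.
Variable R : comNzRingType.

Definition subsetR (I J : R -> Prop) : Prop := forall x, I x -> J x.
Definition eqI (I J : R -> Prop) : Prop := forall x, I x <-> J x.

Definition is_ideal (I : R -> Prop) : Prop :=
  [/\ I 0, (forall x y, I x -> I y -> I (x + y)) & (forall r x, I x -> I (r * x))].

Definition ideal_gen (S : R -> Prop) : R -> Prop :=
  fun z => forall K, is_ideal K -> subsetR S K -> K z.

Definition ideal_mul (I J : R -> Prop) : R -> Prop :=
  ideal_gen (fun z => exists a b, [/\ I a, J b & z = a * b]).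

Fixpoint ideal_pow (I : R -> Prop) (n : nat) : R -> Prop :=
  match n with
  | 0 => fun _ => True
  | n'.+1 => ideal_mul (ideal_pow I n') I
  end.

Definition frob_pow (I : R -> Prop) (q : nat) : R -> Prop :=
  ideal_gen (fun z => exists a, I a /\ z = a ^+ q).

Definition prime_ideal (P : R -> Prop) : Prop :=
  [/\ is_ideal P, ~ P 1 & forall a b, P (a * b) -> P a \/ P b].

Definition maximal_ideal (M : R -> Prop) : Prop :=
  [/\ is_ideal M, ~ M 1 &
      forall N, is_ideal N -> subsetR M N -> ~ N 1 -> subsetR N M].

Definition local_ring (m : R -> Prop) : Prop :=
  maximal_ideal m /\ forall M, maximal_ideal M -> eqI M m.

Definition noetherian : Prop :=
  forall I, is_ideal I ->
    exists s : seq R, eqI I (ideal_gen (fun z => z \in s)).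

Definition prime_chain (P : nat -> R -> Prop) (n : nat) : Prop :=
  (forall i, (i <= n)%N -> prime_ideal (P i)) /\
  (forall i, (i < n)%N -> subsetR (P i) (P i.+1) /\ ~ subsetR (P i.+1) (P i)).

Definition krull_dim (d : nat) : Prop :=
  (exists P, prime_chain P d) /\ ~ (exists P, prime_chain P d.+1).

Definition primary_to (m I : R -> Prop) : Prop :=
  [/\ is_ideal I, subsetR I m & forall x, m x -> exists n, I (x ^+ n)].

Definition reduction (J I : R -> Prop) : Prop :=
  [/\ is_ideal J, subsetR J I &
      exists n, eqI (ideal_mul J (ideal_pow I n)) (ideal_pow I n.+1)].

Definition minimal_reduction (J I : R -> Prop) : Prop :=
  reduction J I /\ forall K, reduction K I -> subsetR K J -> subsetR J K.

(* The extended Rees algebra R' = R[I t, t^-1] of an ideal I is the graded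
   subring of R[t, t^-1] whose degree-n component is  rees_comp I n * t^n,
   where rees_comp I n = I^n for n >= 0 and = R for n < 0. *)
Definition rees_comp (I : R -> Prop) (n : int) : R -> Prop :=
  match n with
  | Posz k => ideal_pow I k
  | Negz _ => fun _ => True
  end.

(* Top local cohomology H^d_{(y_1,...,y_d)}(R') via the Cech complex, with
   y_i = z_i t (z_i in I, homogeneous of degree 1), Y = y_1 ... y_d.
   H^d = R'_Y / sum_i Im(R'_{Y/y_i}).  A homogeneous class of degree n is
   [a t^(n+dk) / Y^k] with a in rees_comp I (n + d k); it vanishes iff for some
   s, (a t^(n+dk)) Y^s lies in the ideal (y_1^(k+s), ..., y_d^(k+s)) of R'; by
   homogeneity the coefficients may be taken of degree n + (d-1)(k+s), i.e.
   a * (prod z)^s = sum_i c_i z_i^(k+s) with c_i in rees_comp I (n+(d-1)(k+s)).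
   [topH_nonzero_deg I z n] states that the degree-n component of
   H^d_{(z_1 t,...,z_d t)}(R[I t, t^-1]) is nonzero. *)
Definition cech_class_zero (d : nat) (I : R -> Prop) (z : 'I_d -> R)
    (n : int) (k : nat) (a : R) : Prop :=
  exists s : nat, exists c : 'I_d -> R,
    (forall i, rees_comp I (n + ((d.-1 * (k + s))%N)%:Z) (c i)) /\
    a * (\prod_(i < d) z i) ^+ s = \sum_(i < d) c i * z i ^+ (k + s).

Definition topH_nonzero_deg (d : nat) (I : R -> Prop) (z : 'I_d -> R)
    (n : int) : Prop :=
  exists k : nat, exists a : R,
    rees_comp I (n + ((d * k)%N)%:Z) a /\ ~ cech_class_zero I z n k a.

(* a(M) <= a(N) for Z-graded modules, with a(M) = sup {n | M_n <> 0} taken in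
   Z ∪ {±oo}:  every nonzero degree of M is bounded by a nonzero degree of N. *)
Definition a_inv_le (M N : int -> Prop) : Prop :=
  forall n, M n -> exists n', n <= n' /\ N n'.

End CommAlg.

(* Main.v *)
Require Import Defs.
From mathcomp Require Import all_boot all_order all_algebra.
From Stdlib Require Import Classical.
Set Implicit Arguments. Unset Strict Implicit. Unset Printing Implicit Defensive.
Import GRing.Theory Num.Theory.
Local Open Scope ring_scope.

Lemma size_predC1 d (i : 'I_d) :
  size [seq j <- index_enum 'I_d | j != i] = d.-1.
Proof.
rewrite size_filter.
have := cardC1 i; rewrite card_ord => <-.
by rewrite cardE /enum_mem size_filter.
Qed.

Section Aux.
Variable R : comNzRingType.
Implicit Types (I A B S K : R -> Prop).

Lemma gen_ideal S : is_ideal (ideal_gen S).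
Proof.
split.
- by move=> K [] ? _ _ _.
- by move=> x y hx hy K hK hS; case: (hK) => _ hadd _; apply: hadd; [apply: hx|apply: hy].
- by move=> r x hx K hK hS; case: (hK) => _ _ hm; apply: hm; apply: hx.
Qed.

Lemma gen_sub S K : is_ideal K -> subsetR S K -> subsetR (ideal_gen S) K.
Proof. by move=> hK hS x hx; apply: hx. Qed.

Lemma gen_in S x : S x -> ideal_gen S x.
Proof. by move=> hx K _ hS; apply: hS. Qed.

Lemma pow_ideal I n : is_ideal (ideal_pow I n).
Proof. by case: n => [|n] /=; [split|apply: gen_ideal]. Qed.

Lemma rees_mulr I m r c : rees_comp I m c -> rees_comp I m (r * c).
Proof.
case: m => [j|j] //= h.
by have := pow_ideal I j; rewrite /is_ideal => -[_ _ hm]; apply: hm.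
Qed.

Lemma rees_shift1 I m c y : rees_comp I m c -> I y -> rees_comp I (m + 1) (c * y).
Proof.
case: m => [j|[|j]] hc hy //.
rewrite -PoszD addn1 /=.
apply: gen_in; exists c, y; split => //.
Qed.

Lemma rees_shift_seq I (T : Type) (z : T -> R) (l : seq T) m c :
  (forall j, I (z j)) -> rees_comp I m c ->
  rees_comp I (m + (size l)%:Z) (c * \prod_(j <- l) z j).
Proof.
move=> hz; elim: l m c => [|a l IH] m c hc.
  by rewrite big_nil mulr1 addr0.
rewrite big_cons mulrA /=.
have -> : m + (size l).+1%:Z = (m + 1) + (size l)%:Z.
  by rewrite -[(size l).+1]addn1 PoszD addrA addrAC.
apply: IH; exact: rees_shift1.
Qed.
Lemma rees0 I m : rees_comp I m 0.
Proof. by case: m => [j|j] //=; have := pow_ideal I j; rewrite /is_ideal => -[]. Qed.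

Lemma reesD I m a b : rees_comp I m a -> rees_comp I m b -> rees_comp I m (a + b).
Proof.
case: m => [j|j] //= ha hb.
by have := pow_ideal I j; rewrite /is_ideal => -[_ hadd _]; apply: hadd.
Qed.
End Aux.

From mathcomp Require Import ring.
Section Aux2.
Variable R : comNzRingType.
Variable d : nat.
Variable I : R -> Prop.
Variable z : 'I_d -> R.
Variables (n : int) (k : nat).

Definition Zc (y : R) (s : nat) : Prop :=
  exists c : 'I_d -> R,
    (forall i, rees_comp I (n + ((d.-1 * (k + s))%N)%:Z) (c i)) /\
    y * (\prod_(i < d) z i) ^+ s = \sum_(i < d) c i * z i ^+ (k + s).

Hypothesis hz : forall j, I (z j).

Lemma Zc_shift1 y s : Zc y s -> Zc y s.+1.
Proof.
move=> [c [hc he]].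
exists (fun i => c i * \prod_(j <- [seq j <- index_enum 'I_d | j != i]) z j).
split.
  move=> i; have := @rees_shift_seq _ I _ z [seq j <- index_enum 'I_d | j != i] _ _ hz (hc i).
  rewrite size_predC1 addnS mulnS PoszD [(d.-1)%:Z + _]addrC addrA.
  done.
rewrite exprSr mulrA he mulr_suml; apply: eq_bigr => i _.
rewrite (bigD1 i) //= big_filter addnS exprS.
ring.
Qed.

Lemma Zc_shift y s t : Zc y s -> Zc y (s + t).
Proof.
elim: t => [|t IH]; first by rewrite addn0.
by rewrite addnS => h; apply: Zc_shift1; apply: IH.
Qed.

Lemma Zc_ideal : is_ideal (fun y => exists s, Zc y s).
Proof.
split.
- exists 0%N, (fun _ => 0); split.
    by move=> i; apply: rees0.
  by rewrite mul0r big1 // => i _; rewrite mul0r.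
- move=> x y [s1 h1] [s2 h2].
  have [c1 [hc1 he1]] := Zc_shift (s2) h1.
  have := Zc_shift s1 h2; rewrite addnC => -[c2 [hc2 he2]].
  exists (s1 + s2)%N, (fun i => c1 i + c2 i); split.
    by move=> i; apply: reesD.
  by rewrite mulrDl he1 he2 -big_split /=; apply: eq_bigr => i _; rewrite mulrDl.
- move=> r x [s [c [hc he]]]; exists s, (fun i => r * c i); split.
    by move=> i; apply: rees_mulr.
  by rewrite -mulrA he mulr_sumr; apply: eq_bigr => i _; rewrite mulrA.
Qed.
End Aux2.

Section Frob.
Variable R : comNzRingType.
Variables (p e : nat).
Hypothesis hp : p \in [pchar R].
Local Notation q := (p ^ e)%N.

Lemma q_gt0 : (0 < q)%N.
Proof. by rewrite expn_gt0 prime_gt0 // (pcharf_prime hp). Qed.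

Lemma frobD (x y : R) : (x + y) ^+ q = x ^+ q + y ^+ q.
Proof.
elim: e => [|e' IH]; first by rewrite !expn0 !expr1.
rewrite expnSr !exprM IH exprDn_pchar //.
by rewrite pnatE ?(pcharf_prime hp).
Qed.

Lemma frob0 : (0 : R) ^+ q = 0.
Proof. by rewrite expr0n; case: eqP => // h; move: q_gt0; rewrite h. Qed.

Lemma frob_sum d (F : 'I_d -> R) : (\sum_(i < d) F i) ^+ q = \sum_(i < d) F i ^+ q.
Proof. exact: (big_morph (fun x => x ^+ q) frobD frob0). Qed.

Lemma pow_frob (I : R -> Prop) m c :
  ideal_pow I m c -> ideal_pow (frob_pow I q) m (c ^+ q).
Proof.
elim: m c => [|m IH] c //= hc.
pose K := fun c : R => ideal_mul (ideal_pow (frob_pow I q) m) (frob_pow I q) (c ^+ q).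
have hK : is_ideal K.
  split; rewrite /K.
  - rewrite frob0; have [] := gen_ideal (fun z => exists a b,
      [/\ ideal_pow (frob_pow I q) m a, frob_pow I q b & z = a * b]) => //.
  - move=> a b ha hb; rewrite frobD.
    by have [_ hadd _] := gen_ideal (fun z => exists a b,
      [/\ ideal_pow (frob_pow I q) m a, frob_pow I q b & z = a * b]); apply: hadd.
  - move=> r a ha; rewrite exprMn.
    by have [_ _ hm] := gen_ideal (fun z => exists a b,
      [/\ ideal_pow (frob_pow I q) m a, frob_pow I q b & z = a * b]); apply: hm.
apply: (gen_sub hK _ hc) => z [a [b [ha hb ->]]].
rewrite /K exprMn; apply: gen_in; exists (a ^+ q), (b ^+ q); split => //.
  exact: IH.
by apply: gen_in; exists b.
Qed.

Lemma rees_frob (I : R -> Prop) m c :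
  rees_comp I m c -> rees_comp (frob_pow I q) m (c ^+ q).
Proof. by case: m => [j|j] //=; apply: pow_frob. Qed.

Lemma frob_mul (A B : R -> Prop) u v :
  frob_pow A q u -> frob_pow B q v -> frob_pow (ideal_mul A B) q (u * v).
Proof.
move=> hu hv.
pose K := fun u : R => forall v, frob_pow B q v -> frob_pow (ideal_mul A B) q (u * v).
have [h0 hadd hmul] := gen_ideal (fun z => exists a, ideal_mul A B a /\ z = a ^+ q).
have hK : is_ideal K.
  split; rewrite /K.
  - by move=> w _; rewrite mul0r.
  - by move=> a b ha hb w hw; rewrite mulrDl; apply: hadd; [apply: ha|apply: hb].
  - by move=> r a ha w hw; rewrite -mulrA; apply: hmul; apply: ha.
apply: (gen_sub hK _ hu) hv => _ [a [ha ->]] w hw.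
pose K' := fun w : R => frob_pow (ideal_mul A B) q (a ^+ q * w).
have hK' : is_ideal K'.
  split; rewrite /K'.
  - by rewrite mulr0.
  - by move=> x y hx hy; rewrite mulrDr; apply: hadd.
  - by move=> r x hx; rewrite mulrCA; apply: hmul.
apply: (gen_sub hK' _ hw) => _ [b [hb ->]].
rewrite /K' -exprMn; apply: gen_in; exists (a * b); split => //.
by apply: gen_in; exists a, b.
Qed.

Lemma pow_frob_sub (I : R -> Prop) N :
  subsetR (ideal_pow (frob_pow I q) N) (frob_pow (ideal_pow I N) q).
Proof.
elim: N => [|N IH] /=.
  move=> y _; have [_ _ hm] := gen_ideal (fun z => exists a, (fun _ : R => True) a /\ z = a ^+ q).
  rewrite -[y]mulr1; apply: hm; apply: gen_in; exists 1; by rewrite expr1n.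
apply: gen_sub; first exact: gen_ideal.
move=> _ [u [v [hu hv ->]]].
exact: frob_mul (IH _ hu) hv.
Qed.
End Frob.

Lemma key (R : comNzRingType) (p e d : nat) (hp : p \in [pchar R]) (I : R -> Prop)
   (x : 'I_d -> R) n k a r :
  cech_class_zero I x n k a ->
  exists s, Zc (frob_pow I (p ^ e)) (fun i => x i ^+ (p ^ e)) n k (r * a ^+ (p ^ e)) s.
Proof.
move=> [s [c [hc he]]]; exists s, (fun i => r * c i ^+ (p ^ e)); split.
  by move=> i; apply: rees_mulr; apply: (rees_frob e hp).
rewrite prodrXl exprAC -mulrA -exprMn he (frob_sum e hp) mulr_sumr.
by apply: eq_bigr => i _; rewrite exprMn exprAC mulrA.
Qed.

Unset Implicit Arguments.
Set Strict Implicit.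
Theorem proposition3p4 (R : comNzRingType) (p d : nat)
    (m I J : R -> Prop) (x : 'I_d -> R) :
  noetherian R -> local_ring m -> krull_dim R d ->
  p \in [pchar R] ->
  primary_to m I ->
  minimal_reduction J I ->
  eqI J (ideal_gen (fun z => exists i, z = x i)) ->
  (* x_1, ..., x_d is a system of parameters *)
  primary_to m (ideal_gen (fun z => exists i, z = x i)) ->
  forall e : nat,
    let q := (p ^ e)%N in
    a_inv_le (topH_nonzero_deg (frob_pow I q) (fun i => x i ^+ q))
             (topH_nonzero_deg I x).
Proof.
move=> _ _ _ hp _ [[_ hJI _] _] hJ _ e q n [k [b [hb hnz]]].
have hxI : forall j, I (x j).
  move=> j; apply: hJI; apply/hJ; apply: gen_in; by exists j.
have hz : forall j, frob_pow I q (x j ^+ q).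
  by move=> j; apply: gen_in; exists (x j).
exists n; split => //.
apply: NNPP => hN.
have H0 : forall k a, rees_comp I (n + (d * k)%N%:Z) a -> cech_class_zero I x n k a.
  move=> k' a ha; apply: NNPP => hc; apply: hN; exists k', a; split => //.
apply: hnz.
move: hb; case E: (n + (d * k)%N%:Z) => [N|N] hb.
- apply: (@pow_frob_sub R p e I N b hb _ (Zc_ideal n k hz)) => _ [a [ha ->]].
  have := @key R p e d hp I x n k a 1 (H0 k a ltac:(by rewrite E)).
  by rewrite mul1r.
- have := @key R p e d hp I x n k 1 b (H0 k 1 ltac:(by rewrite E)).
  by rewrite expr1n mulr1.
Qed.
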